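(* Let $k\ge2$. Then $\operatorname{ZIR}(N_k)=2k=\frac12|V(N_k)|$.
   Context: The $k$th necklace $N_k$: take $k$ disjoint diamonds (a diamond is $K_4$ minus an edge), the $i$th having vertices $a_i,b_i,c_i,d_i$ with all edges among them except $a_ic_i$; add the edges $c_ia_{i+1}$ for $1\le i\le k-1$ and $c_ka_1$. A nonempty $F\subseteq V(G)$ is a fort if every $v\notin F$ has $|N(v)\cap F|\ne1$. A private fort of $x\in S$ relative to $S$ is a fort $F$ with $S\cap F=\{x\}$; $S$ is a ZIr-set if every element of $S$ has a private fort. $\operatorname{ZIR}(G)$ is the maximum cardinality of an inclusion-maximal ZIr-set. *)

(* Defs.v *)
From mathcomp Require Import all_boot.
Set Implicit Arguments. Unset Strict Implicit. Unset Printing Implicit Defensive.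

(* A graph is given by a finite vertex type T and an adjacency relation e
   (intended symmetric and irreflexive). *)
Section Zero.
Variables (T : finType) (e : rel T).

Definition nbhd (v : T) : {set T} := [set u | e v u].

Definition is_fort (F : {set T}) : bool :=
  (F != set0) && [forall v, (v \notin F) ==> (#|nbhd v :&: F| != 1)].

Definition private_fort (S : {set T}) (x : T) (F : {set T}) : bool :=
  is_fort F && (S :&: F == [set x]).

Definition ZIr_set (S : {set T}) : bool :=
  [forall x in S, [exists F : {set T}, private_fort S x F]].

Definition ZIR : nat := \max_(S : {set T} | maxset ZIr_set S) #|S|.
End Zero.

(* The k-th necklace N_k: vertex (i, r) with i : 'I_k the diamond index and
   r : 'I_4 the role, 0 = a_i, 1 = b_i, 2 = c_i, 3 = d_i.  Diamond i has all
   edges among its four vertices except a_i c_i; plus edges c_i a_{i+1}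
   (indices mod k, so c_k a_1 is included). *)
Definition necklace_adj (k : nat) (x y : 'I_k * 'I_4) : bool :=
  let: (i, p) := x in let: (j, q) := y in
  [&& i == j, p != q, ~~ ((val p == 0) && (val q == 2))
                    & ~~ ((val p == 2) && (val q == 0))]
  || [&& val p == 2, val q == 0 & val j == (val i).+1 %% k]
  || [&& val p == 0, val q == 2 & val i == (val j).+1 %% k].

(* Main.v *)
Require Import Defs.
From mathcomp Require Import all_boot zify.
Set Implicit Arguments. Unset Strict Implicit. Unset Printing Implicit Defensive.

Definition r0 : 'I_4 := @Ordinal 4 0 isT.
Definition r1 : 'I_4 := @Ordinal 4 1 isT.
Definition r2 : 'I_4 := @Ordinal 4 2 isT.
Definition r3 : 'I_4 := @Ordinal 4 3 isT.

Lemma card3 (T : finType) (x y z : T) (F : {set T}) : uniq [:: x; y; z] ->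
  #|[set x; y; z] :&: F| = (x \in F) + (y \in F) + (z \in F).
Proof.
move=> U.
have -> : #|[set x; y; z] :&: F| = #|filter (mem F) [:: x; y; z]|.
  apply: eq_card; move=> u. rewrite !inE mem_filter !inE. idtac.
  by rewrite andbC orbA.
by rewrite (card_uniqP _) ?filter_uniq // size_filter /= addn0 addnA.
Qed.


Fixpoint bools (n : nat) : seq (seq bool) :=
  if n is n'.+1 then map (cons true) (bools n') ++ map (cons false) (bools n') else [:: [::]].
Lemma mem_bools n s : size s = n -> s \in bools n.
Proof.
have Ic (b : bool) : injective (cons b) by move=> x y [].
elim: n s => [|n IH] [|b s] //= [Hs]; rewrite mem_cat.
by case: b; [rewrite (mem_map (Ic true)) IH | rewrite (mem_map (Ic false)) IH ?orbT].
Qed.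
Definition ne1 (a b c : bool) : bool := (a + b + c != 1)%N.
Definition fortokl (F : seq bool) : bool :=
  match F with
  | [:: a; b; c; d; A; B; C; D; p; q] =>
    [&& a || ne1 b d p, b || ne1 a c d, c || ne1 b d A, d || ne1 a b c,
        A || ne1 B D c, B || ne1 A C D, C || ne1 B D q & D || ne1 A B C]
  | _ => false end.
Lemma fortokl_intro a b c d A B C D p q :
  a || ne1 b d p -> b || ne1 a c d -> c || ne1 b d A -> d || ne1 a b c ->
  A || ne1 B D c -> B || ne1 A C D -> C || ne1 B D q -> D || ne1 A B C ->
  fortokl [:: a; b; c; d; A; B; C; D; p; q].
Proof. by move=> /= -> -> -> -> -> -> -> ->. Qed.
Definition privok (fs : seq (seq bool)) (s : seq bool) (x : nat) : bool :=
  has (fun F => nth false F x &&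
     all (fun y => (y == x) || ~~ nth false s y || ~~ nth false F y) (iota 0 8)) fs.
Definition goodS fs (s : seq bool) := all (fun x => ~~ nth false s x || privok fs s x) (iota 0 8).
Lemma local_check : let fs := filter fortokl (bools 10) in
  all (fun s => goodS fs s ==> (count id s <= 4)) (bools 8).
Proof. vm_compute. reflexivity. Qed.

Section N.
Variable k : nat.
Local Notation e := (@necklace_adj k).

Lemma predE (i j : 'I_k) : (val i == (val j).+1 %% k) = (j == ord_pred i).
Proof.
by rewrite -(inj_eq (@ordS_inj k)) ord_predK eq_sym.
Qed.
Lemma succE (i j : 'I_k) : (val j == (val i).+1 %% k) = (j == ordS i).
Proof. by []. Qed.

Lemma nb0 i : nbhd e (i, r0) = [set (i, r1); (i, r3); (ord_pred i, r2)].
Proof.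
apply/setP => [[j s]]; rewrite !inE /necklace_adj predE succE !xpair_eqE.
case: s => [[|[|[|[|s]]]] Hs] //=; rewrite ?(eq_sym i) ?andbF ?andbT ?orbF //.
all: by rewrite /= (can2_eq (@ordSK k) (@ord_predK k)).
Qed.

Lemma nb1 i : nbhd e (i, r1) = [set (i, r0); (i, r2); (i, r3)].
Proof.
apply/setP => [[j s]]; rewrite !inE /necklace_adj !xpair_eqE.
case: s => [[|[|[|[|s]]]] Hs] //=; rewrite ?(eq_sym i) ?andbF ?andbT ?orbF //.
Qed.
Lemma nb2 i : nbhd e (i, r2) = [set (i, r1); (i, r3); (ordS i, r0)].
Proof.
apply/setP => [[j s]]; rewrite !inE /necklace_adj !xpair_eqE.
case: s => [[|[|[|[|s]]]] Hs] //=; rewrite ?(eq_sym i) ?andbF ?andbT ?orbF //.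
Qed.
Lemma nb3 i : nbhd e (i, r3) = [set (i, r0); (i, r1); (i, r2)].
Proof.
apply/setP => [[j s]]; rewrite !inE /necklace_adj !xpair_eqE.
case: s => [[|[|[|[|s]]]] Hs] //=; rewrite ?(eq_sym i) ?andbF ?andbT ?orbF //.
Qed.

Lemma cnt0 (F : {set 'I_k * 'I_4}) i : #|nbhd e (i, r0) :&: F| =
  ((i, r1) \in F) + ((i, r3) \in F) + ((ord_pred i, r2) \in F).
Proof. by rewrite nb0 card3 //= !inE !xpair_eqE -!val_eqE /= !andbF. Qed.

Lemma cnt1 (F : {set 'I_k * 'I_4}) i : #|nbhd e (i, r1) :&: F| =
  ((i, r0) \in F) + ((i, r2) \in F) + ((i, r3) \in F).
Proof. by rewrite nb1 card3 //= !inE !xpair_eqE -!val_eqE /= !andbF. Qed.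
Lemma cnt2 (F : {set 'I_k * 'I_4}) i : #|nbhd e (i, r2) :&: F| =
  ((i, r1) \in F) + ((i, r3) \in F) + ((ordS i, r0) \in F).
Proof. by rewrite nb2 card3 //= !inE !xpair_eqE -!val_eqE /= !andbF. Qed.
Lemma cnt3 (F : {set 'I_k * 'I_4}) i : #|nbhd e (i, r3) :&: F| =
  ((i, r0) \in F) + ((i, r1) \in F) + ((i, r2) \in F).
Proof. by rewrite nb3 card3 //= !inE !xpair_eqE -!val_eqE /= !andbF. Qed.

Lemma fortcond (F : {set 'I_k * 'I_4}) v : is_fort e F -> (v \in F) || (#|nbhd e v :&: F| != 1).
Proof.
case/andP => _ /forallP /(_ v). by case: (v \in F).
Qed.

Lemma ordS_neq (hk : 1 < k) (i : 'I_k) : (i == ordS i) = false.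
Proof.
apply/negbTE; rewrite -val_eqE /=.
have := ltn_ord i; case: (ltnP i.+1 k) => h Hi.
  by rewrite modn_small // neq_ltn ltnSn.
have -> : i.+1 = k by apply/eqP; rewrite eqn_leq h Hi.
rewrite modnn; apply/eqP => E; rewrite E in h; move: h hk; case: k => [|[|]] //.
Qed.

Definition vs (i : 'I_k) := [:: (i, r0); (i, r1); (i, r2); (i, r3);
  (ordS i, r0); (ordS i, r1); (ordS i, r2); (ordS i, r3)].
Definition vs10 i := vs i ++ [:: (ord_pred i, r2); (ordS (ordS i), r0)].

Lemma uniq_vs (hk : 1 < k) i : uniq (vs i).
Proof.
rewrite /= !inE !xpair_eqE (ordS_neq hk) /=. by rewrite -!val_eqE /= !andbF.

Qed.

Lemma fortok_vs (F : {set 'I_k * 'I_4}) i : is_fort e F -> fortokl [seq v \in F | v <- vs10 i].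
Proof.
move=> Ff.
apply: fortokl_intro.
- by have := fortcond (i, r0) Ff; rewrite cnt0.
- by have := fortcond (i, r1) Ff; rewrite cnt1.
- by have := fortcond (i, r2) Ff; rewrite cnt2.
- by have := fortcond (i, r3) Ff; rewrite cnt3.
- by have := fortcond (ordS i, r0) Ff; rewrite cnt0 ordSK.
- by have := fortcond (ordS i, r1) Ff; rewrite cnt1.
- by have := fortcond (ordS i, r2) Ff; rewrite cnt2.
- by have := fortcond (ordS i, r3) Ff; rewrite cnt3.
Qed.

End N.

Section M.
Variable k : nat.
Local Notation e := (@necklace_adj k).

Definition fS (S : {set 'I_k * 'I_4}) (i : 'I_k) :=
  ((i, r0) \in S) + ((i, r1) \in S) + ((i, r2) \in S) + ((i, r3) \in S).

Lemma sum4 (g : 'I_4 -> nat) : \sum_(r < 4) g r = g r0 + g r1 + g r2 + g r3.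
Proof.
rewrite !big_ord_recl big_ord0 addn0 !addnA.
by congr (_ + _ + _ + _); congr g; apply: val_inj.
Qed.

Lemma cardS (S : {set 'I_k * 'I_4}) : #|S| = \sum_i fS S i.
Proof.
rewrite -sum1_card big_mkcond /=. have -> : \sum_(v : 'I_k * 'I_4) (if v \in S then 1 else 0) = \sum_(a < k) \sum_(b < 4) (if (a, b) \in S then 1 else 0) by rewrite pair_bigA; apply: eq_bigr => -[].
apply: eq_bigr => i _; rewrite sum4 /fS.
by rewrite /=; case: ((i, r0) \in S); case: ((i, r1) \in S); case: ((i, r2) \in S); case: ((i, r3) \in S).
Qed.

Lemma local_bound (hk : 1 < k) (S : {set 'I_k * 'I_4}) (ZS : ZIr_set e S) i :
  fS S i + fS S (ordS i) <= 4.
Proof.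
set s := [seq v \in S | v <- vs i].
have Svs : size (vs i) = 8 by [].
have Hs : count id s = fS S i + fS S (ordS i) by rewrite /s /= /fS !addnA addn0.
rewrite -Hs.
have := allP local_check s (mem_bools (size_map _ _)).
move/implyP; apply.
apply/allP => x; rewrite mem_iota add0n => /andP [_ Hx].
rewrite /s (nth_map (i, r0)) //.
rewrite -implybE; apply/implyP => Hv.
have /existsP [F /andP [Ff /eqP HSF]] : [exists F, private_fort e S (nth (i, r0) (vs i) x) F].
  by move/forallP: ZS => /(_ (nth (i, r0) (vs i) x)); rewrite Hv.
rewrite /privok; apply/hasP; exists [seq v \in F | v <- vs10 i].
  by rewrite mem_filter fortok_vs // mem_bools // size_map.
apply/andP; split.
  rewrite (nth_map (i, r0)); last by rewrite /vs10 size_cat Svs /=; lia.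
  rewrite /vs10 nth_cat Svs Hx.
  have : nth (i, r0) (vs i) x \in S :&: F by rewrite HSF set11.
  by rewrite inE => /andP [].
apply/allP => y; rewrite mem_iota add0n => /andP [_ Hy].
rewrite (nth_map (i, r0)) // (nth_map (i, r0)); last by rewrite /vs10 size_cat Svs /=; lia.
rewrite /vs10 nth_cat Svs Hy.
case: eqP => //= Hyx.
rewrite -negb_and; apply/negP => /andP [Hy1 Hy2].
have : nth (i, r0) (vs i) y \in S :&: F by rewrite inE Hy1 Hy2.
rewrite HSF inE => /eqP E; apply: Hyx; apply/eqP.
by rewrite -(nth_uniq (i, r0) _ _ (uniq_vs hk i)) ?E.
Qed.

Lemma bound (hk : 1 < k) (S : {set 'I_k * 'I_4}) (ZS : ZIr_set e S) : #|S| <= 2 * k.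
Proof.
have H2 : 2 * #|S| = \sum_i (fS S i + fS S (ordS i)).
  have E : \sum_i fS S (ordS i) = \sum_i fS S i.
    by rewrite [RHS](reindex_inj (@ordS_inj k)).
  rewrite big_split /= E cardS; by rewrite mul2n addnn.
have : 2 * #|S| <= 4 * k.
  rewrite H2; apply: (@leq_trans (\sum_(i < k) 4)).
    by apply: leq_sum => i _; exact: local_bound.
  by rewrite sum_nat_const card_ord mulnC.
lia.
Qed.
End M.

Lemma rE : ((r0 == r0) = true) * ((r0 == r1) = false) * ((r0 == r2) = false) * ((r0 == r3) = false)
  * ((r1 == r0) = false) * ((r1 == r1) = true) * ((r1 == r2) = false) * ((r1 == r3) = false)
  * ((r2 == r0) = false) * ((r2 == r1) = false) * ((r2 == r2) = true) * ((r2 == r3) = false)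
  * ((r3 == r0) = false) * ((r3 == r1) = false) * ((r3 == r2) = false) * ((r3 == r3) = true).
Proof. by []. Qed.

Lemma O4 (n : nat) (H : n < 4) : Ordinal H = match n with 0 => r0 | 1 => r1 | 2 => r2 | _ => r3 end.
Proof. by apply: val_inj; case: n H => [|[|[|[|n]]]]. Qed.

Section L.
Variable k : nat.
Local Notation e := (@necklace_adj k).

Definition S0 : {set 'I_k * 'I_4} := [set v | val v.2 < 2].
Definition F1 (i : 'I_k) : {set 'I_k * 'I_4} := [set (i, r1); (i, r3)].
Definition F2 (i : 'I_k) : {set 'I_k * 'I_4} :=
  [set v | (v == (i, r0)) || (val v.2 == 2) || ((val v.2 == 3) && (v.1 != i))].

Lemma card_S0 : #|S0| = 2 * k.
Proof.
rewrite cardS; under eq_bigr => i _ do rewrite /fS !inE /=.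
by rewrite sum_nat_const card_ord mulnC.
Qed.

Lemma fort1 i : is_fort e (F1 i).
Proof.
apply/andP; split.
  by apply/set0Pn; exists (i, r1); rewrite !inE eqxx.
apply/forallP => [[j s]]; apply/implyP.
case: s => [[|[|[|[|s]]]] Hs] //; rewrite O4 /=;
  rewrite ?cnt0 ?cnt1 ?cnt2 ?cnt3 /F1 !inE !xpair_eqE !rE ?andbT ?andbF ?orbF;
  by case: (j == i).
Qed.

Lemma fort2 i : is_fort e (F2 i).
Proof.
apply/andP; split.
  by apply/set0Pn; exists (i, r0); rewrite !inE eqxx.
apply/forallP => [[j s]]; apply/implyP.
case: s => [[|[|[|[|s]]]] Hs] //; rewrite O4 /=;
  rewrite ?cnt0 ?cnt1 ?cnt2 ?cnt3 /F2 !inE !xpair_eqE !rE /= ?andbT ?andbF ?orbF ?orbT;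
  by case: (j == i).
Qed.

Lemma ZIr_S0 : ZIr_set e S0.
Proof.
apply/forallP => [[i s]]; apply/implyP; rewrite inE /=.
case: s => [[|[|s]] Hs] //= _; rewrite O4 /=.
  apply/existsP; exists (F2 i); rewrite /private_fort fort2 /=.
  apply/eqP/setP => [[j s]]; rewrite !inE !xpair_eqE.
  case: s => [[|[|[|[|s]]]] Hs'] //; rewrite O4 /= !rE ?andbT ?andbF ?orbF ?orbT //;
  by case: (j == i).
apply/existsP; exists (F1 i); rewrite /private_fort fort1 /=.
apply/eqP/setP => [[j s]]; rewrite !inE !xpair_eqE.
case: s => [[|[|[|[|s]]]] Hs'] //; rewrite O4 /= !rE ?andbT ?andbF ?orbF ?orbT //;
by case: (j == i).
Qed.
End L.

Theorem theorem4p4 (k : nat) (hk : 2 <= k) :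
  ZIR (@necklace_adj k) = 2 * k /\ 2 * k = #|{: 'I_k * 'I_4}| %/ 2.
Proof.
split; last first.
  rewrite card_prod !card_ord.
  have -> : k * 4 = 2 * k * 2 by lia.
  by rewrite mulnK.
apply/eqP; rewrite eqn_leq; apply/andP; split.
  apply/bigmax_leqP => S /maxsetP [ZS _]; exact: bound.
have mS0 : maxset (ZIr_set (@necklace_adj k)) (S0 k).
  apply/maxsetP; split; first exact: ZIr_S0.
  move=> B ZB sub; apply/eqP; rewrite eq_sym eqEcard sub /= card_S0.
  exact: bound.
rewrite -(card_S0 k).
rewrite /ZIR; exact: (leq_bigmax_cond _ mS0).
Qed.
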